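(* Let $k>1$ and let $f:\mathbb{R}\to\mathbb{R}$ be a positive, continuously differentiable function. Then the planar system $$\frac{dI}{d\tau}=I\,[f(R)(1-I-R)-k],\qquad \frac{dR}{d\tau}=(k-1)I-R$$ has no non-constant periodic solution $(I(\tau),R(\tau))$ with $I(\tau)>0$ for all $\tau$. *)

(* Defs.v *)
From Stdlib Require Import Reals.
From Coquelicot Require Import Coquelicot.
Open Scope R_scope.

Definition cont_diff1 (f : R -> R) : Prop :=
  (forall x, ex_derive f x) /\ (forall x, continuous (Derive f) x).

Definition is_solution (f : R -> R) (k : R) (I Rc : R -> R) : Prop :=
  forall t,
    is_derive I t (I t * (f (Rc t) * (1 - I t - Rc t) - k)) /\
    is_derive Rc t ((k - 1) * I t - Rc t).

Definition periodic2 (I Rc : R -> R) : Prop :=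
  exists T, 0 < T /\ forall t, I (t + T) = I t /\ Rc (t + T) = Rc t.

Definition nonconstant2 (I Rc : R -> R) : Prop :=
  exists t s, I t <> I s \/ Rc t <> Rc s.

(* Main.v *)
Require Import Defs.
From Stdlib Require Import Reals.
From Coquelicot Require Import Coquelicot.
From Stdlib Require Import Lra.
Open Scope R_scope.

Lemma cplus (f g : R -> R) x : continuous f x -> continuous g x ->
  continuous (fun y => f y + g y) x.
Proof. intros; apply (continuous_plus f g x); auto. Qed.
Lemma cminus (f g : R -> R) x : continuous f x -> continuous g x ->
  continuous (fun y => f y - g y) x.
Proof. intros; apply (continuous_minus f g x); auto. Qed.
Lemma cmult (f g : R -> R) x : continuous f x -> continuous g x ->
  continuous (fun y => f y * g y) x.
Proof. intros; apply (continuous_mult f g x); auto. Qed.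
Lemma cconst (c x : R) : continuous (fun _ : R => c) x.
Proof. apply continuous_const. Qed.
Lemma cid (x : R) : continuous (fun y : R => y) x.
Proof. apply continuous_id. Qed.

Lemma dplus (f g : R -> R) x a b : is_derive f x a -> is_derive g x b ->
  is_derive (fun y => f y + g y) x (a + b).
Proof. intros; apply (is_derive_plus f g x a b); auto. Qed.
Lemma dminus (f g : R -> R) x a b : is_derive f x a -> is_derive g x b ->
  is_derive (fun y => f y - g y) x (a - b).
Proof. intros; apply (is_derive_minus f g x a b); auto. Qed.
Lemma dmult (f g : R -> R) x a b : is_derive f x a -> is_derive g x b ->
  is_derive (fun y => f y * g y) x (a * g x + f x * b).
Proof. intros; apply (is_derive_mult f g x a b); auto. intros; apply Rmult_comm. Qed.
Lemma dcomp (f g : R -> R) x a b : is_derive f (g x) a -> is_derive g x b ->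
  is_derive (fun y => f (g y)) x (b * a).
Proof. intros; apply (is_derive_comp f g x a b); auto. Qed.
Lemma dconst (c x : R) : is_derive (fun _ : R => c) x 0.
Proof. apply (is_derive_const c x). Qed.
Lemma dext (f : R -> R) x a b : is_derive f x a -> a = b -> is_derive f x b.
Proof. intros; subst; auto. Qed.

Lemma sign_lemma (a b phi : R) : 0 < a -> 0 < b -> 0 < phi -> a <> b ->
  0 < (a - b) * (phi * a - phi * b + ln a - ln b).
Proof.
  intros ha hb hp hab.
  destruct (Rtotal_order a b) as [h|[h|h]].
  - assert (ln a < ln b) by (apply ln_increasing; auto).
    assert (phi * a < phi * b) by (apply Rmult_lt_compat_l; auto).
    nra.
  - contradiction.
  - assert (ln b < ln a) by (apply ln_increasing; auto).
    assert (phi * b < phi * a) by (apply Rmult_lt_compat_l; auto).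
    nra.
Qed.

Lemma mvt (g g' : R -> R) a b : a < b -> (forall t, is_derive g t (g' t)) ->
  exists c, g b - g a = g' c * (b - a) /\ a < c < b.
Proof.
  intros hab hd. apply MVT_cor2; auto.
  intros c _. apply is_derive_Reals; auto.
Qed.

Theorem lemma2 (k : R) (f : R -> R)
  (hk : 1 < k) (hfpos : forall x, 0 < f x) (hf : cont_diff1 f) :
  ~ exists I Rc : R -> R,
      is_solution f k I Rc /\ periodic2 I Rc /\ nonconstant2 I Rc /\
      (forall t, 0 < I t).
Proof.
  intros [I [Rc [hsol [[T [hT hper]] [hnc hpos]]]]].
  destruct hf as [hfd _].
  assert (hc : 0 < k - 1) by lra.
  assert (hRpos : forall t, 0 < Rc t).
  { intro t.
    set (g := fun s => exp s * Rc s).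
    assert (hg : forall s, is_derive g s (exp s * ((k-1) * I s))).
    { intro s. unfold g. eapply dext.
      - apply dmult. apply is_derive_exp. apply (proj2 (hsol s)).
      - simpl; ring. }
    destruct (mvt g _ t (t + T) ltac:(lra) hg) as [c [hc1 hc2]].
    unfold g in hc1. rewrite (proj2 (hper t)) in hc1.
    assert (0 < exp c * ((k-1) * I c) * (t + T - t)).
    { apply Rmult_lt_0_compat; [|lra].
      apply Rmult_lt_0_compat; [apply exp_pos|].
      apply Rmult_lt_0_compat; auto. }
    assert (exp t < exp (t + T)) by (apply exp_increasing; lra).
    assert (0 < exp t) by apply exp_pos.
    nra. }
  set (h2 := fun r => f r * (1 - r) - k - f r * r * / (k - 1)).
  assert (hcont : forall r, continuous h2 r).
  { intro r. unfold h2.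
    assert (cf : continuous f r) by (apply (ex_derive_continuous (K:=R_AbsRing) (V:=R_NormedModule)); apply hfd).
    apply cminus. apply cminus. apply cmult. exact cf. apply cminus. apply cconst. apply cid.
    apply cconst. apply cmult. apply cmult. exact cf. apply cid. apply cconst. }
  set (H := fun r => RInt h2 0 r).
  assert (hH : forall r, is_derive H r (h2 r)).
  { intro r. apply (is_derive_RInt h2 H 0 r); auto.
    apply filter_forall. intro b. unfold H; apply (RInt_correct (V:=R_CompleteNormedModule)).
    apply ex_RInt_continuous. intros; auto. }
  set (Phi := fun t => H (Rc t) - (k - 1) * I t + ln (I t) * Rc t
                       - (Rc t * ln (Rc t / (k - 1)) - Rc t)).
  set (J := fun t => ((k-1) * I t - Rc t) *
     (f (Rc t) * I t + ln (I t) - f (Rc t) * (Rc t / (k-1)) - ln (Rc t / (k-1)))).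
  assert (hPhi : forall t, is_derive Phi t (J t)).
  { intro t. destruct (hsol t) as [dI dR].
    assert (hI := hpos t). assert (hR := hRpos t).
    assert (dlnI : is_derive (fun s => ln (I s)) t
               ((I t * (f (Rc t) * (1 - I t - Rc t) - k)) * / I t)).
    { apply dcomp; auto. apply is_derive_ln; auto. }
    assert (dq : is_derive (fun s => Rc s / (k - 1)) t (((k - 1) * I t - Rc t) / (k-1))).
    { unfold Rdiv. eapply dext. apply (dmult Rc (fun _ => / (k-1))). apply dR. apply dconst. simpl. ring. }
    assert (dlnR : is_derive (fun s => ln (Rc s / (k - 1))) t
               ((((k - 1) * I t - Rc t) / (k-1)) * / (Rc t / (k - 1)))).
    { apply dcomp; auto. apply is_derive_ln. apply Rdiv_lt_0_compat; auto. }
    eapply dext.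
    { unfold Phi. apply dminus. apply dplus. apply dminus.
      apply (dcomp H Rc). apply hH. apply dR.
      apply (is_derive_scal I t (k-1)). apply dI.
      apply (dmult (fun s => ln (I s)) Rc). apply dlnI. apply dR.
      apply dminus. apply (dmult Rc (fun s => ln (Rc s / (k - 1)))). apply dR. apply dlnR. apply dR. }
    unfold J, h2; simpl. match goal with |- ?a = ?b => change (@eq R a b) end. field. split; lra. }
  assert (hJ : forall t, 0 <= J t /\ (J t = 0 -> (k - 1) * I t - Rc t = 0)).
  { intro t.
    assert (hI := hpos t). assert (hR := hRpos t).
    destruct (Req_dec (I t) (Rc t / (k-1))) as [e|ne].
    - assert (e2 : (k - 1) * I t - Rc t = 0) by (rewrite e; field; lra).
      unfold J. rewrite e2. split; [lra| auto].
    - assert (hs := sign_lemma (I t) (Rc t / (k-1)) (f (Rc t)) hI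
               ltac:(apply Rdiv_lt_0_compat; auto) (hfpos _) ne).
      assert (e3 : J t = (k - 1) * ((I t - Rc t / (k - 1)) *
          (f (Rc t) * I t - f (Rc t) * (Rc t / (k - 1)) + ln (I t) - ln (Rc t / (k - 1))))).
      { unfold J. field. lra. }
      rewrite e3. split.
      + apply Rlt_le, Rmult_lt_0_compat; auto.
      + intro z. exfalso. assert (0 < (k-1) * ((I t - Rc t / (k - 1)) *
          (f (Rc t) * I t - f (Rc t) * (Rc t / (k - 1)) + ln (I t) - ln (Rc t / (k - 1))))).
        apply Rmult_lt_0_compat; auto. lra. }
  assert (hmono : forall a b, a <= b -> Phi a <= Phi b).
  { intros a b hab. destruct (Req_dec a b) as [e|ne]. subst; lra.
    destruct (mvt Phi J a b ltac:(lra) hPhi) as [c [e _]].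
    assert (0 <= J c) by apply hJ. nra. }
  assert (hperP : forall t, Phi (t + T) = Phi t).
  { intro t. unfold Phi. rewrite (proj1 (hper t)), (proj2 (hper t)). reflexivity. }
  assert (hJ0 : forall t, (k - 1) * I t - Rc t = 0).
  { intro t0. apply (proj2 (hJ t0)).
    assert (hloc : is_derive Phi t0 0).
    { apply (is_derive_ext_loc (fun _ => Phi (t0 - T/2))).
      - assert (hT2 : 0 < T/2) by lra.
        exists (mkposreal _ hT2). intros s hs.
        unfold ball in hs; simpl in hs; unfold AbsRing_ball, abs, minus, plus, opp in hs;
        simpl in hs.
        apply Rabs_def2 in hs. destruct hs as [hs1 hs2].
        apply Rle_antisym.
        + apply hmono. lra.
        + rewrite <- (hperP (t0 - T/2)). apply hmono. lra.
      - apply dconst. }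
    rewrite <- (is_derive_unique _ _ _ (hPhi t0)).
    exact (is_derive_unique _ _ _ hloc). }
  assert (hRc : forall a b, Rc a = Rc b).
  { assert (forall a b, a < b -> Rc a = Rc b).
    { intros a b hab.
      destruct (mvt Rc (fun t => (k - 1) * I t - Rc t) a b hab
        (fun t => proj2 (hsol t))) as [c [e _]].
      rewrite hJ0 in e. lra. }
    intros a b. destruct (Rtotal_order a b) as [h|[h|h]].
    - auto.
    - subst; reflexivity.
    - symmetry; auto. }
  destruct hnc as [t [s [h|h]]].
  - apply h. assert (e1 := hJ0 t). assert (e2 := hJ0 s). rewrite (hRc t s) in e1.
    apply (Rmult_eq_reg_l (k - 1)); lra.
  - apply h, hRc.
Qed.
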